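(* Let $m\ge1$ and $u_1,\ldots,u_m,v_1,\ldots,v_m$ be real parameters, and let $T(u,v)$ be the differential operator $$T(u,v)=-x\prod_{j=1}^m(D+2-v_j)+\prod_{j=1}^m(D+1-u_j),\qquad D=x\frac{d}{dx}.$$ Suppose $f$ is a function defined on $(0,1]$ solving the initial value system $$T(u,v)f(x)=0,\qquad f^{(j)}(1)=0\ \text{ for } 0\le j\le m-1.$$ Then for every integer $n\ge0$ $$\int_0^1x^nf(x)\,dx=\prod_{i=1}^m\frac{(u_i)_n}{(v_i)_n}\int_0^1f(x)\,dx.$$
   Context: $(a)_n=\Gamma(a+n)/\Gamma(a)$ denotes the Pochhammer symbol. *)

(* Defs.v *)
From Stdlib Require Import Reals.
From Coquelicot Require Export Coquelicot.
Open Scope R_scope.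

Fixpoint poch (a : R) (n : nat) : R :=
  match n with
  | O => 1
  | S k => poch a k * (a + INR k)
  end.

Fixpoint prodR (m : nat) (F : nat -> R) : R :=
  match m with
  | O => 1
  | S k => prodR k F * F k
  end.

Definition DplusC (c : R) (g : R -> R) : R -> R :=
  fun x => x * Derive g x + c * g x.

(* prod_{j=0}^{k-1} (D + c_j) applied to g (the factors commute). *)
Fixpoint prodD (c : nat -> R) (k : nat) (g : R -> R) : R -> R :=
  match k with
  | O => g
  | S k' => DplusC (c k') (prodD c k' g)
  end.

(* T(u,v) = - x prod_j (D + 2 - v_j) + prod_j (D + 1 - u_j),
   parameters indexed u_0..u_{m-1}, v_0..v_{m-1}. *)
Definition Top (m : nat) (u v : nat -> R) (f : R -> R) : R -> R :=
  fun x => - x * prodD (fun j => 2 - v j) m f x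
           + prodD (fun j => 1 - u j) m f x.

(* Main.v *)
Require Import Defs.
From Stdlib Require Import Reals Lra Lia.
From Coquelicot Require Import Coquelicot.
Open Scope R_scope.

Lemma lim_plus {T} (F : (T -> Prop) -> Prop) {FF : Filter F} (a b : T -> R) la lb :
  filterlim a F (locally la) -> filterlim b F (locally lb) ->
  filterlim (fun x => a x + b x) F (locally (la + lb)).
Proof. intros Ha Hb. exact (filterlim_comp_2 a b Rplus Ha Hb (filterlim_plus la lb)). Qed.

Lemma lim_mult {T} (F : (T -> Prop) -> Prop) {FF : Filter F} (a b : T -> R) la lb :
  filterlim a F (locally la) -> filterlim b F (locally lb) ->
  filterlim (fun x => a x * b x) F (locally (la * lb)).
Proof. intros Ha Hb. exact (filterlim_comp_2 a b Rmult Ha Hb (filterlim_mult la lb)). Qed.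

Lemma lim_ext0 {T} (F : (T -> Prop) -> Prop) {FF : Filter F} (a : T -> R) (l l' : R) :
  l = l' -> filterlim a F (locally l) -> filterlim a F (locally l').
Proof. intros ->; auto. Qed.

Lemma Rpower_pos x s : 0 < Rpower x s.
Proof. unfold Rpower; apply exp_pos. Qed.

Lemma Rpower_S1 x s : 0 < x -> Rpower x s = x * Rpower x (s - 1).
Proof. intros Hx. replace s with (1 + (s - 1)) at 1 by ring.
  rewrite Rpower_plus, Rpower_1; auto. Qed.

Lemma Rpow_derive s x : 0 < x -> is_derive (fun y => Rpower y s) x (s * Rpower x (s-1)).
Proof.
  intros Hx. unfold Rpower.
  assert (H: is_derive (fun y => exp (s * ln y)) x (exp (s*ln x) * (s * / x))).
  { auto_derive; [exact Hx| ring]. }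
  replace (s * exp ((s-1)*ln x)) with (exp (s*ln x) * (s * / x)); auto.
  replace ((s-1)*ln x) with (s * ln x + - ln x) by ring.
  rewrite exp_plus, exp_Ropp, exp_ln by exact Hx. field. lra.
Qed.

Lemma Rpow_cont s x : 0 < x -> continuous (fun y => Rpower y s) x.
Proof. intros Hx. apply (ex_derive_continuous (K:=R_AbsRing) (V:=R_NormedModule) (fun y => Rpower y s)). eexists. apply Rpow_derive; auto. Qed.

Definition U x := 0 < x < 1.

Lemma U_loc x : U x -> locally x U.
Proof. intros [H1 H2]. apply (locally_interval _ x 0 1); simpl; auto.
  intros y Hy1 Hy2; split; auto. Qed.

Lemma at_left1_U : at_left 1 U.
Proof. exists (mkposreal 1 Rlt_0_1). intros y Hy Hy1. unfold ball in Hy; simpl in Hy.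
  unfold AbsRing_ball, abs, minus, plus, opp in Hy; simpl in Hy. unfold U.
  apply Rabs_lt_between in Hy. lra. Qed.

Lemma at_right0_U : at_right 0 U.
Proof. exists (mkposreal 1 Rlt_0_1). intros y Hy Hy1. unfold ball in Hy; simpl in Hy.
  unfold AbsRing_ball, abs, minus, plus, opp in Hy; simpl in Hy. unfold U.
  apply Rabs_lt_between in Hy. lra. Qed.

Lemma cmul (a b : R -> R) x : continuous a x -> continuous b x -> continuous (fun t => a t * b t) x.
Proof. intros Ha Hb. exact (continuous_mult (K:=R_AbsRing) a b x Ha Hb). Qed.
Lemma cplus (a b : R -> R) x : continuous a x -> continuous b x -> continuous (fun t => a t + b t) x.
Proof. intros Ha Hb. exact (continuous_plus (V:=R_NormedModule) a b x Ha Hb). Qed.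
Lemma cconst (c x : R) : continuous (fun _ : R => c) x.
Proof. exact (continuous_const (U:=R_UniformSpace) (V:=R_UniformSpace) c x). Qed.
Lemma cder (a : R -> R) x l : is_derive a x l -> continuous a x.
Proof. intros H. apply (ex_derive_continuous (K:=R_AbsRing) (V:=R_NormedModule) a). exists l; exact H. Qed.

Lemma Rpower_le1 y g : 0 < y < 1 -> 0 <= g -> Rpower y g <= 1.
Proof. intros Hy Hg. unfold Rpower. rewrite <- exp_0. 
  assert (ln y < 0). { rewrite <- ln_1. apply ln_increasing; lra. }
  destruct (Rle_lt_or_eq_dec 0 g Hg) as [Hg'|Hg'].
  left. apply exp_increasing. nra. subst. right. f_equal. ring. Qed.

Lemma ball_R (a b : R) (eps : posreal) : ball a eps b <-> Rabs (b - a) < eps.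
Proof. unfold ball; simpl. unfold AbsRing_ball, abs, minus, plus, opp; simpl. tauto. Qed.

Lemma Rpow_lim0 g : 0 < g -> filterlim (fun x => Rpower x g) (at_right 0) (locally 0).
Proof.
  intros Hg. apply filterlim_locally. intros eps.
  exists (mkposreal (exp (ln eps / g)) (exp_pos _)). intros y Hy Hy0.
  apply ball_R in Hy. simpl in Hy. apply ball_R.
  change (Rabs (y - 0) < exp (ln eps / g)) in Hy. rewrite Rminus_0_r in *. rewrite Rabs_pos_eq in Hy by lra.
  rewrite Rabs_pos_eq by (left; apply Rpower_pos).
  unfold Rpower. rewrite <- (exp_ln eps) by apply cond_pos.
  apply exp_increasing.
  assert (ln y < ln eps / g). { rewrite <- (ln_exp (ln eps / g)). apply ln_increasing; auto. }
  apply Rmult_lt_compat_l with (r := g) in H; auto.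
  replace (g * (ln eps / g)) with (ln eps) in H by (field; lra). lra.
Qed.

Lemma bnd_lim (a b : R -> R) d B : 0 < d -> (forall x, 0 < x < d -> Rabs (a x) <= B) ->
  filterlim b (at_right 0) (locally 0) -> filterlim (fun x => b x * a x) (at_right 0) (locally 0).
Proof.
  intros Hd Ha Hb. apply filterlim_locally. intros eps.
  assert (HB : 0 < Rabs B + 1) by (assert (0 <= Rabs B) by apply Rabs_pos; lra).
  assert (H1 := proj1 (filterlim_locally _ _) Hb (mkposreal (eps / (Rabs B + 1)) ltac:(apply Rdiv_lt_0_compat; [apply cond_pos|lra]))).
  assert (H2 : at_right 0 (fun x => 0 < x < d)).
  { exists (mkposreal d Hd). intros y Hy Hy0. change (Rabs (y - 0) < d) in Hy.
    rewrite Rminus_0_r, Rabs_pos_eq in Hy; lra. }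
  generalize (filter_and _ _ H1 H2). apply filter_imp. intros x [Hx1 Hx2].
  change (Rabs (b x - 0) < eps / (Rabs B + 1)) in Hx1. change (Rabs (b x * a x - 0) < eps).
  rewrite Rminus_0_r in *.
  rewrite Rabs_mult. assert (Hax := Ha x Hx2).
  assert (Rabs B + 1 > 0) by lra.
  assert (Rabs (b x) * (Rabs B + 1) < eps).
  { apply Rmult_lt_reg_r with (/ (Rabs B + 1)). apply Rinv_0_lt_compat; lra.
    replace (Rabs (b x) * (Rabs B + 1) * / (Rabs B + 1)) with (Rabs (b x)) by (field; lra). unfold Rdiv in Hx1; exact Hx1. }
  assert (B <= Rabs B) by apply RRle_abs.
  assert (0 <= Rabs (b x)) by apply Rabs_pos. assert (0 <= Rabs (a x)) by apply Rabs_pos.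
  nra.
Qed.

Lemma prodR_ext k F G : (forall i, (i < k)%nat -> F i = G i) -> prodR k F = prodR k G.
Proof. induction k; intros H; simpl; auto. rewrite IHk, H; auto. Qed.

Lemma prodR_mult k F G : prodR k (fun i => F i * G i) = prodR k F * prodR k G.
Proof. induction k; simpl. ring. rewrite IHk; ring. Qed.

Lemma prodR_nz k F : (forall i, (i < k)%nat -> F i <> 0) -> prodR k F <> 0.
Proof. induction k; intros H; simpl. lra. apply Rmult_integral_contrapositive_currified; auto. Qed.

Lemma prodR_one k : prodR k (fun _ => 1) = 1.
Proof. induction k; simpl; auto. rewrite IHk; ring. Qed.

Lemma poch_nz a n : (forall k, (k < n)%nat -> a + INR k <> 0) -> poch a n <> 0.
Proof. induction n; intros H; simpl. lra. apply Rmult_integral_contrapositive_currified; auto. Qed.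

Fixpoint polyS (n : nat) (P : R -> R -> R) : Prop :=
  match n with
  | O => forall s s' x, P s x = P s' x
  | S n' => forall s0, exists Q, polyS n' Q /\ forall s x, P s x = P s0 x + (s - s0) * Q s x
  end.

Lemma polyS_ext n P P' : (forall s x, P s x = P' s x) -> polyS n P -> polyS n P'.
Proof.
  destruct n; simpl; intros E H.
  { intros; rewrite <- !E; auto. }
  intros s0; destruct (H s0) as [Q [HQ HE]]; exists Q; split; auto.
  intros; rewrite <- !E; auto.
Qed.

Lemma polyS_lift n P : polyS n P -> polyS (S n) P.
Proof.
  revert P; induction n; intros P H.
  { simpl in *. intros s0. exists (fun _ _ => 0). split. auto.
    intros; rewrite (H s s0); ring. }
  simpl. intros s0. destruct (H s0) as [Q [HQ HE]]. exists Q. split; auto.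
  apply IHn; auto.
Qed.

Lemma polyS_const n (h : R -> R) : polyS n (fun _ x => h x).
Proof. induction n. simpl; auto. apply polyS_lift; auto. Qed.

Lemma polyS_add n P P' : polyS n P -> polyS n P' -> polyS n (fun s x => P s x + P' s x).
Proof.
  revert P P'; induction n; simpl; intros P P' H H'.
  { intros; rewrite (H s s'), (H' s s'); auto. }
  intros s0. destruct (H s0) as [Q [HQ HE]]. destruct (H' s0) as [Q' [HQ' HE']].
  exists (fun s x => Q s x + Q' s x). split. apply IHn; auto.
  intros; rewrite HE, HE'; ring.
Qed.

Lemma polyS_scalx n (h : R -> R) P : polyS n P -> polyS n (fun s x => h x * P s x).
Proof.
  revert P; induction n; simpl; intros P H.
  { intros; rewrite (H s s'); auto. }
  intros s0. destruct (H s0) as [Q [HQ HE]].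
  exists (fun s x => h x * Q s x). split. apply IHn; auto.
  intros; rewrite HE; ring.
Qed.

Lemma polyS_mulc n c P : polyS n P -> polyS (S n) (fun s x => (c - s) * P s x).
Proof.
  revert P; induction n; intros P H.
  { simpl in *. intros s0. exists (fun _ x => - P s0 x). split. auto.
    intros; rewrite (H s s0); ring. }
  simpl. intros s0. destruct (H s0) as [Q [HQ HE]].
  exists (fun s x => (c - s) * Q s x + - P s0 x). split.
  { apply (polyS_add (S n)). apply IHn; auto. apply (polyS_const (S n) (fun x => - P s0 x)). }
  intros; rewrite HE; ring.
Qed.

Lemma polyS_shift n a P : polyS n P -> polyS n (fun s x => P (s + a) x).
Proof.
  revert P; induction n; simpl; intros P H.
  { intros; apply H. }
  intros s0. destruct (H (s0 + a)) as [Q [HQ HE]].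
  exists (fun s x => Q (s + a) x). split. apply IHn; auto.
  intros; rewrite HE. replace (s + a - (s0 + a)) with (s - s0) by ring. auto.
Qed.

Lemma polyS_interp {T} (F : (T -> Prop) -> Prop) {FF : Filter F} n P (phi : R -> R) (g : T -> R) (pts : nat -> R) :
  polyS n P ->
  (forall i j, (i <= n)%nat -> (j <= n)%nat -> i <> j -> pts i <> pts j) ->
  (forall j, (j <= n)%nat -> filterlim (fun t => phi (g t) * P (pts j) (g t)) F (locally 0)) ->
  forall s, filterlim (fun t => phi (g t) * P s (g t)) F (locally 0).
Proof.
  revert P pts; induction n; intros P pts HP Hd Hl s.
  { simpl in HP. apply (filterlim_ext (fun t => phi (g t) * P (pts 0%nat) (g t))).
    intros; rewrite (HP s (pts 0%nat)); auto. apply Hl; lia. }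
  simpl in HP. destruct (HP (pts 0%nat)) as [Q [HQ HE]].
  assert (HQl : forall s, filterlim (fun t => phi (g t) * Q s (g t)) F (locally 0)).
  { apply (IHn Q (fun j => pts (S j))); auto.
    { intros i j Hi Hj Hij. apply Hd; lia. }
    intros j Hj.
    assert (Hne : pts (S j) - pts 0%nat <> 0).
    { assert (pts (S j) <> pts 0%nat) by (apply Hd; lia). lra. }
    apply (filterlim_ext (fun t => / (pts (S j) - pts 0%nat) *
       (phi (g t) * P (pts (S j)) (g t) + (-1) * (phi (g t) * P (pts 0%nat) (g t))))).
    { intros t. rewrite (HE (pts (S j))). field. auto. }
    apply (@lim_ext0 T F FF _ (/ (pts (S j) - pts 0%nat) * (0 + (-1) * 0)) 0). ring.
    apply (@lim_mult T F FF). apply filterlim_const. apply (@lim_plus T F FF). apply Hl; lia.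
    apply (@lim_mult T F FF). apply filterlim_const. apply Hl; lia. }
  apply (filterlim_ext (fun t => phi (g t) * P (pts 0%nat) (g t) + (s - pts 0%nat) * (phi (g t) * Q s (g t)))).
  { intros t; rewrite (HE s); ring. }
  apply (@lim_ext0 T F FF _ (0 + (s - pts 0%nat) * 0) 0). ring.
  apply (@lim_plus T F FF). apply Hl; lia. apply (@lim_mult T F FF). apply filterlim_const. auto.
Qed.

Lemma polyS_cont n P x : polyS n P -> forall s0, filterlim (fun s => P s x) (locally s0) (locally (P s0 x)).
Proof.
  revert P; induction n; intros P H s0.
  { simpl in H. apply (filterlim_ext (fun _ => P s0 x)). intros; apply H. apply filterlim_const. }
  simpl in H. destruct (H s0) as [Q [HQ HE]].
  apply (filterlim_ext (fun s => P s0 x + (s + - s0) * Q s x)). intros s; rewrite (HE s); ring.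
  apply (@lim_ext0 R (locally s0) _ _ (P s0 x + (s0 + - s0) * Q s0 x)). ring.
  apply (@lim_plus R (locally s0) _). apply filterlim_const.
  apply (@lim_mult R (locally s0) _). apply (@lim_plus R (locally s0) _).
  apply filterlim_id. apply filterlim_const. apply IHn; auto.
Qed.

Section LDsec.
Variable m : nat.
Variable f : R -> R.
Hypothesis Hdiff : forall (k : nat) (x : R), (k <= m)%nat -> 0 < x < 1 -> ex_derive_n f k x.
Hypothesis Hinit : forall j : nat, (j < m)%nat ->
     filterlim (Derive_n f j) (at_left 1) (locally 0).

Inductive LD (k : nat) : (R -> R) -> Prop :=
| LD_base j : (j <= k)%nat -> LD k (Derive_n f j)
| LD_add g h : LD k g -> LD k h -> LD k (fun x => g x + h x)
| LD_scal a g : LD k g -> LD k (fun x => a * g x)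
| LD_x g : LD k g -> LD k (fun x => x * g x)
| LD_ext g h : LD k g -> (forall x, U x -> g x = h x) -> LD k h.

Lemma LD_mono k k' g : (k <= k')%nat -> LD k g -> LD k' g.
Proof.
  intros Hk H; induction H.
  - apply LD_base; lia.
  - apply LD_add; auto.
  - apply LD_scal; auto.
  - apply LD_x; auto.
  - eapply LD_ext; eauto.
Qed.

Lemma LD_zero k : LD k (fun _ => 0).
Proof. eapply LD_ext. apply (LD_scal k 0 _ (LD_base k 0 (Nat.le_0_l _))).
  intros; simpl; ring. Qed.

Lemma LD_der k g : (k < m)%nat -> LD k g ->
  exists g', LD (S k) g' /\ forall x, U x -> is_derive g x (g' x).
Proof.
  intros Hk H; induction H.
  - exists (Derive_n f (S j)). split. apply LD_base; lia.
    intros x Hx. assert (E: ex_derive_n f (S j) x) by (apply Hdiff; [lia|exact Hx]).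
    simpl in E. apply Derive_correct in E. exact E.
  - destruct IHLD1 as [g' [G1 G2]]. destruct IHLD2 as [h' [H1 H2]].
    exists (fun x => g' x + h' x). split. apply LD_add; auto.
    intros x Hx. apply (is_derive_plus g h x (g' x) (h' x)); auto.
  - destruct IHLD as [g' [G1 G2]].
    exists (fun x => a * g' x). split. apply LD_scal; auto.
    intros x Hx. apply is_derive_scal; auto.
  - destruct IHLD as [g' [G1 G2]].
    exists (fun x => g x + x * g' x). split.
    apply LD_add. apply (LD_mono k); auto. apply LD_x; auto.
    intros x Hx.
    assert (D := is_derive_mult (fun t => t) g x 1 (g' x) (is_derive_id x) (G2 x Hx) Rmult_comm).
    simpl in D. unfold mult, plus in D; simpl in D.
    replace (g x + x * g' x) with (1 * g x + x * g' x) by ring. exact D.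
  - destruct IHLD as [g' [G1 G2]]. exists g'. split; auto.
    intros x Hx. apply (is_derive_ext_loc g h). 
    generalize (U_loc x Hx). apply filter_imp. intros; auto.
    auto.
Qed.

Lemma LD_lim k g : (k < m)%nat -> LD k g -> filterlim g (at_left 1) (locally 0).
Proof.
  intros Hk H; induction H as [j Hj|g h Hg IHg Hh IHh|a g Hg IHg|g Hg IHg|g h Hg IHg Hgh].
  { apply Hinit; lia. }
  { apply (lim_ext0 (at_left 1) _ (0+0) 0). ring. apply lim_plus; auto. all: exact _. }
  { apply (lim_ext0 (at_left 1) _ (a*0) 0). ring. apply lim_mult. all: try exact _. all: auto. apply filterlim_const. }
  { apply (lim_ext0 (at_left 1) _ (1*0) 0). ring. apply lim_mult. all: try exact _. all: auto.
    apply (filterlim_filter_le_1 (F := locally 1)).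
    intros P HP. apply filter_le_within. exact HP.
    apply filterlim_id. }
  { apply (filterlim_ext_loc g h). generalize at_left1_U. apply filter_imp. auto. auto. }
Qed.


Lemma prodD_LD c k : (k <= m)%nat -> LD k (prodD c k f).
Proof.
  induction k as [|k IH]; intros Hk.
  { simpl. apply (LD_ext 0 (Derive_n f 0)). apply LD_base; lia. intros; reflexivity. }
  assert (Hg := IH ltac:(lia)).
  destruct (LD_der k _ ltac:(lia) Hg) as [g' [G1 G2]].
  apply (LD_ext (S k) (fun x => x * g' x + c k * prodD c k f x)).
  { apply LD_add. apply LD_x; auto. apply LD_scal. apply (LD_mono k); auto. }
  intros x Hx. simpl. unfold DplusC. rewrite (is_derive_unique _ _ _ (G2 x Hx)). reflexivity.
Qed.

Lemma prodD_der c k x : (k < m)%nat -> U x ->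
  is_derive (prodD c k f) x (Derive (prodD c k f) x).
Proof.
  intros Hk Hx. destruct (LD_der k _ Hk (prodD_LD c k ltac:(lia))) as [g' [_ G2]].
  apply Derive_correct. exists (g' x). apply G2; auto.
Qed.

Lemma f_der x : (1 <= m)%nat -> U x -> is_derive f x (Derive f x).
Proof. intros Hm Hx. apply (prodD_der (fun _ => 0) 0 x); auto. Qed.

Lemma f_cont x : (1 <= m)%nat -> U x -> continuous f x.
Proof. intros Hm Hx. apply (ex_derive_continuous (K:=R_AbsRing) (V:=R_NormedModule) f).
  eexists. apply f_der; auto. Qed.

Fixpoint Wc (c : nat -> R) (k : nat) (s x : R) : R :=
  match k with
  | O => 0
  | S k' => prodD c k' f x + (c k' - s) * Wc c k' s x
  end.

Lemma Wc_deriv c s k x : (k <= m)%nat -> U x ->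
  is_derive (fun y => Rpower y s * Wc c k s y) x
    (Rpower x (s-1) * (prodD c k f x - prodR k (fun j => c j - s) * f x)).
Proof.
  intros Hk Hx. induction k as [|k IH].
  { simpl. replace (Rpower x (s - 1) * (f x - 1 * f x)) with (@zero R_NormedModule).
    apply (is_derive_ext (fun _ => 0)). intros; simpl; ring. apply is_derive_const.
    simpl. unfold zero; simpl. ring. }
  assert (IH' := IH ltac:(lia)).
  assert (Hg := prodD_der c k x ltac:(lia) Hx).
  assert (Hp := Rpow_derive s x (proj1 Hx)).
  assert (D1 := is_derive_mult _ _ x _ _ Hp Hg Rmult_comm).
  assert (D2 := is_derive_scal _ x (c k - s) _ IH').
  assert (D := is_derive_plus _ _ x _ _ D1 D2).
  simpl in D. unfold mult, plus in D; simpl in D.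
  apply (is_derive_ext (fun y => Rpower y s * prodD c k f y + (c k - s) * (Rpower y s * Wc c k s y))).
  { intros t; simpl; ring. }
  replace (Rpower x (s - 1) * (prodD c (S k) f x - prodR (S k) (fun j : nat => c j - s) * f x))
    with (s * Rpower x (s - 1) * prodD c k f x + Rpower x s * Derive (prodD c k f) x +
      (c k - s) * (Rpower x (s - 1) * (prodD c k f x - prodR k (fun j : nat => c j - s) * f x))).
  exact D.
  simpl. unfold DplusC. rewrite (Rpower_S1 x s (proj1 Hx)). ring.
Qed.

Lemma Wc_LD c k s : (k <= m)%nat -> LD (m - 1) (Wc c k s).
Proof.
  induction k as [|k IH]; intros Hk.
  { simpl. apply LD_zero. }
  simpl. apply LD_add. apply (LD_mono k). lia. apply prodD_LD; lia.
  apply LD_scal. apply IH; lia.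
Qed.

Hypothesis Hm : (1 <= m)%nat.
Variables u v : nat -> R.
Hypothesis Hode : forall x : R, 0 < x < 1 -> Top m u v f x = 0.

Definition u' := fun j => 1 - u j.
Definition v' := fun j => 2 - v j.
Definition w s x := Wc u' m s x - x * Wc v' m (s + 1) x.
Definition beta s x := Rpower x s * w s x.
Definition Pu s := prodR m (fun j => u' j - s).
Definition Pv s := prodR m (fun j => v' j - (s + 1)).
Definition dbeta s x := Rpower x (s - 1) * (Pv s * x - Pu s) * f x.

Lemma beta_deriv s x : U x -> is_derive (beta s) x (dbeta s x).
Proof.
  intros Hx.
  assert (D1 := Wc_deriv u' s m x (le_n _) Hx).
  assert (D2 := Wc_deriv v' (s + 1) m x (le_n _) Hx).
  assert (D := is_derive_minus _ _ x _ _ D1 D2).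
  apply (is_derive_ext_loc (fun y => Rpower y s * Wc u' m s y - Rpower y (s + 1) * Wc v' m (s + 1) y)).
  { generalize (U_loc x Hx). apply filter_imp. intros y Hy. unfold beta, w.
    rewrite Rpower_plus, Rpower_1 by apply Hy. rewrite Rmult_minus_distr_l, Rmult_assoc. reflexivity. }
  unfold minus, plus, opp in D; simpl in D.
  replace (dbeta s x) with (Rpower x (s - 1) * (prodD u' m f x - prodR m (fun j : nat => u' j - s) * f x) +
          - (Rpower x (s + 1 - 1) * (prodD v' m f x - prodR m (fun j : nat => v' j - (s + 1)) * f x))).
  exact D.
  assert (Ho := Hode x Hx). unfold Top in Ho. fold u' v' in Ho.
  replace (s + 1 - 1) with s by ring. rewrite (Rpower_S1 x s (proj1 Hx)).
  unfold dbeta, Pu, Pv.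
  replace (prodD u' m f x) with (x * prodD v' m f x) by lra. ring.
Qed.

Lemma w_LD s : LD (m - 1) (w s).
Proof.
  apply (LD_ext _ (fun x => Wc u' m s x + (-1) * (x * Wc v' m (s + 1) x))).
  apply LD_add. apply Wc_LD; auto. apply LD_scal. apply LD_x. apply Wc_LD; auto.
  intros; unfold w; ring.
Qed.

Lemma beta_lim1 s : filterlim (beta s) (at_left 1) (locally 0).
Proof.
  unfold beta.
  apply (lim_ext0 (at_left 1) _ (1 * 0) 0). ring.
  apply lim_mult. all: try exact _.
  { apply (filterlim_filter_le_1 (F := locally 1)).
    intros P HP. apply filter_le_within. exact HP.
    replace 1 with (Rpower 1 s) at 2. apply Rpow_cont. lra.
    unfold Rpower. rewrite ln_1, Rmult_0_r, exp_0. reflexivity. }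
  apply (LD_lim (m - 1)). lia. apply w_LD.
Qed.

Lemma exRInt_U (g : R -> R) a b : (forall z, U z -> continuous g z) -> U a -> U b -> ex_RInt g a b.
Proof.
  intros Hg Ha Hb. apply (ex_RInt_continuous (V:=R_CompleteNormedModule)). intros z [Hz1 Hz2]. apply Hg.
  unfold U in *. split.
  apply Rlt_le_trans with (Rmin a b); auto. apply Rmin_glb_lt; lra.
  apply Rle_lt_trans with (Rmax a b); auto. apply Rmax_lub_lt; lra.
Qed.

Lemma cont_pf (g : R -> R) z : (forall z, U z -> continuous g z) -> U z -> continuous (fun t => g t * f t) z.
Proof. intros Hg Hz. apply (continuous_mult g f). auto. apply f_cont; auto. Qed.

Variable I0 : R.
Hypothesis HI : @is_RInt_gen R_NormedModule f (at_right 0) (at_left 1) I0.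

Lemma cauchy0 eta : 0 < eta -> exists d, 0 < d < 1 /\ forall x y, 0 < x < d -> 0 < y < d -> Rabs (RInt f x y) <= eta.
Proof.
  intros He.
  assert (H := HI _ (locally_ball I0 (mkposreal (eta/2) ltac:(lra)))).
  destruct H as [Qs Rs HQ HR HQR].
  destruct HQ as [e1 He1]. destruct HR as [e2 He2].
  set (b := 1 - Rmin e2 1 / 2).
  assert (Hb : U b).
  { unfold b, U. assert (0 < Rmin e2 1) by (apply Rmin_glb_lt; [apply cond_pos|lra]).
    assert (Rmin e2 1 <= 1) by apply Rmin_r. lra. }
  assert (Rb : Rs b).
  { apply He2. unfold ball; simpl. unfold AbsRing_ball, abs, minus, plus, opp; simpl.
    unfold b. assert (0 < Rmin e2 1) by (apply Rmin_glb_lt; [apply cond_pos|lra]).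
    assert (Rmin e2 1 <= e2) by apply Rmin_l.
    rewrite Rabs_left; lra. unfold b, U in *; lra. }
  exists (Rmin e1 (1/2)). split.
  { split. apply Rmin_glb_lt; [apply cond_pos|lra]. assert (Rmin e1 (1/2) <= 1/2) by apply Rmin_r. lra. }
  assert (Hx : forall x, 0 < x < Rmin e1 (1/2) -> U x /\ Rabs (RInt f x b - I0) < eta / 2).
  { intros x Hx. assert (Rmin e1 (1/2) <= e1) by apply Rmin_l. assert (Rmin e1 (1/2) <= 1/2) by apply Rmin_r.
    split. unfold U; lra.
    assert (Qx : Qs x).
    { apply He1. unfold ball; simpl. unfold AbsRing_ball, abs, minus, plus, opp; simpl.
      rewrite Rabs_right; lra. lra. }
    destruct (HQR x b Qx Rb) as [y [Hy1 Hy2]]. simpl in Hy1.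
    rewrite (is_RInt_unique _ _ _ _ Hy1).
    unfold ball in Hy2; simpl in Hy2. unfold AbsRing_ball, abs, minus, plus, opp in Hy2; simpl in Hy2.
    exact Hy2. }
  intros x y Hx' Hy'. destruct (Hx x Hx') as [Ux Ix]. destruct (Hx y Hy') as [Uy Iy].
  assert (Hc : forall z, U z -> continuous f z) by (intros; apply f_cont; auto).
  assert (C1 : RInt f x y + RInt f y b = RInt f x b).
  { exact (RInt_Chasles f x y b (exRInt_U f x y Hc Ux Uy) (exRInt_U f y b Hc Uy Hb)). }
  assert (E : RInt f x y = (RInt f x b - I0) - (RInt f y b - I0)) by lra.
  rewrite E. apply Rle_trans with (Rabs (RInt f x b - I0) + Rabs (RInt f y b - I0)).
  unfold Rminus at 1. rewrite <- (Rabs_Ropp (RInt f y b - I0)). apply Rabs_triang. lra.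
Qed.


Lemma Upow_cont g z : U z -> continuous (fun t => Rpower t g) z.
Proof. intros Hz; apply Rpow_cont; apply Hz. Qed.

Lemma WB eta : 0 < eta -> exists d, 0 < d < 1 /\
  forall g x y, 0 <= g -> 0 < x -> x <= y -> y < d ->
    Rabs (RInt (fun t => Rpower t g * f t) x y) <= eta.
Proof.
  intros He. destruct (cauchy0 eta He) as [d [Hd Hc]]. exists d. split; auto.
  intros g x y Hg Hx Hxy Hy.
  assert (Hfc : forall z, U z -> continuous f z) by (intros; apply f_cont; auto).
  assert (Ux : U x) by (unfold U; lra). assert (Uy : U y) by (unfold U; lra).
  set (E := fun t => RInt f y t).
  assert (HE : forall t, U t -> is_derive E t (f t)).
  { intros t Ht. apply (is_derive_RInt f E y t).
    generalize (U_loc t Ht). apply filter_imp. intros t' Ht'. unfold E.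
    apply (RInt_correct (V:=R_CompleteNormedModule)). apply exRInt_U; auto.
    apply Hfc; auto. }
  assert (HEc : forall t, U t -> continuous E t) by (intros; eapply cder; apply HE; auto).
  set (G := fun t => Rpower t g * E t).
  set (G' := fun t => g * Rpower t (g - 1) * E t + Rpower t g * f t).
  set (K := fun t => g * Rpower t (g - 1) * E t).
  assert (HG : forall t, U t -> is_derive G t (G' t)).
  { intros t Ht. assert (D := is_derive_mult _ _ t _ _ (Rpow_derive g t (proj1 Ht)) (HE t Ht) Rmult_comm).
    unfold mult, plus in D; simpl in D. exact D. }
  assert (Hsub : forall t, Rmin x y <= t <= Rmax x y -> U t).
  { intros t [H1 H2]. rewrite Rmin_left in H1 by lra. rewrite Rmax_right in H2 by lra. unfold U; lra. }
  assert (HK : forall t, U t -> continuous K t).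
  { intros t Ht. unfold K. apply cmul. apply cmul. apply cconst. apply Upow_cont; auto. auto. }
  assert (I1 : is_RInt G' x y (G y - G x)).
  { apply (is_RInt_derive (V:=R_CompleteNormedModule) G G' x y).
    intros t Ht; apply HG; auto.
    intros t Ht. assert (Ut := Hsub t Ht). unfold G'. apply cplus. apply HK; auto.
    apply cmul. apply Upow_cont; auto. auto. }
  assert (I2 : is_RInt K x y (RInt K x y)).
  { apply (RInt_correct (V:=R_CompleteNormedModule)). apply exRInt_U; auto. }
  assert (I3 : is_RInt (fun t => Rpower t g * f t) x y (G y - G x - RInt K x y)).
  { assert (I4 := is_RInt_minus _ _ _ _ _ _ I1 I2).
    apply (is_RInt_ext (V:=R_NormedModule) (fun t => minus (G' t) (K t))).
    intros t _. unfold minus, plus, opp, G', K; simpl. ring. exact I4. }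
  rewrite (is_RInt_unique _ _ _ _ I3).
  assert (Gy : G y = 0). { unfold G, E. rewrite RInt_point. unfold zero; simpl. ring. }
  assert (Ex : Rabs (E x) <= eta). { unfold E. rewrite <- Rabs_Ropp. 
    replace (- RInt f y x) with (RInt f x y). apply Hc; lra.
    assert (C1 : RInt f x y + RInt f y x = RInt f x x).
    { exact (RInt_Chasles f x y x (exRInt_U f x y Hfc Ux Uy) (exRInt_U f y x Hfc Uy Ux)). }
    rewrite RInt_point in C1. unfold zero in C1; simpl in C1. lra. }
  set (B := fun t => eta * (g * Rpower t (g - 1))).
  assert (IB : is_RInt B x y (eta * Rpower y g - eta * Rpower x g)).
  { apply (is_RInt_derive (V:=R_CompleteNormedModule) (fun t => eta * Rpower t g) B x y).
    intros t Ht. unfold B. apply is_derive_scal. apply Rpow_derive. apply (Hsub t Ht).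
    intros t Ht. unfold B. apply cmul. apply cconst. apply cmul. apply cconst. apply Upow_cont; auto. }
  assert (IBn : is_RInt (fun t => - B t) x y (- (eta * Rpower y g - eta * Rpower x g))).
  { exact (is_RInt_opp _ _ _ _ IB). }
  assert (Kb : forall t, x < t < y -> - B t <= K t <= B t).
  { intros t Ht. assert (Ut : U t) by (unfold U; lra).
    assert (Et : Rabs (E t) <= eta). { unfold E. rewrite <- Rabs_Ropp.
      replace (- RInt f y t) with (RInt f t y). apply Hc; lra.
      assert (C1 : RInt f t y + RInt f y t = RInt f t t).
      { exact (RInt_Chasles f t y t (exRInt_U f t y Hfc Ut Uy) (exRInt_U f y t Hfc Uy Ut)). }
      rewrite RInt_point in C1. unfold zero in C1; simpl in C1. lra. }
    unfold K, B. assert (0 <= g * Rpower t (g - 1)) by (apply Rmult_le_pos; auto; left; apply Rpower_pos).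
    apply Rabs_le_between in Et.
    split; nra. }
  assert (exK : ex_RInt K x y) by (exists (RInt K x y); exact I2).
  assert (L1 : RInt K x y <= eta * Rpower y g - eta * Rpower x g).
  { rewrite <- (is_RInt_unique _ _ _ _ IB). apply RInt_le; auto. exists (eta * Rpower y g - eta * Rpower x g); exact IB.
    intros t Ht; apply Kb; auto. }
  assert (L2 : - (eta * Rpower y g - eta * Rpower x g) <= RInt K x y).
  { rewrite <- (is_RInt_unique _ _ _ _ IBn). apply RInt_le; auto. exists (- (eta * Rpower y g - eta * Rpower x g)); exact IBn.
    intros t Ht; apply Kb; auto. }
  assert (Ry := Rpower_le1 y g Uy Hg).
  assert (Rx : 0 < Rpower x g) by apply Rpower_pos.
  assert (Gx : Rabs (G x) <= Rpower x g * eta).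
  { unfold G. rewrite Rabs_mult, Rabs_pos_eq by lra. apply Rmult_le_compat_l; lra. }
  rewrite Gy. apply Rabs_le_between in Gx. apply Rabs_le. split; nra.
Qed.

Lemma beta_int s x y : 0 < x -> x <= y -> y < 1 ->
  beta s y - beta s x = Pv s * RInt (fun t => Rpower t s * f t) x y - Pu s * RInt (fun t => Rpower t (s - 1) * f t) x y.
Proof.
  intros Hx Hxy Hy.
  assert (Hfc : forall z, U z -> continuous f z) by (intros; apply f_cont; auto).
  assert (Ux : U x) by (unfold U; lra). assert (Uy : U y) by (unfold U; lra).
  assert (Hsub : forall t, Rmin x y <= t <= Rmax x y -> U t).
  { intros t [H1 H2]. rewrite Rmin_left in H1 by lra. rewrite Rmax_right in H2 by lra. unfold U; lra. }
  assert (I1 : is_RInt (dbeta s) x y (beta s y - beta s x)).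
  { apply (is_RInt_derive (V:=R_CompleteNormedModule) (beta s) (dbeta s) x y).
    intros t Ht; apply beta_deriv; auto.
    intros t Ht. assert (Ut := Hsub t Ht). unfold dbeta. apply cmul. apply cmul. apply Upow_cont; auto.
    apply cplus. apply cmul. apply cconst. apply continuous_id. apply cconst. auto. }
  set (A := RInt (fun t => Rpower t s * f t) x y).
  set (B := RInt (fun t => Rpower t (s - 1) * f t) x y).
  assert (IA : is_RInt (fun t => Rpower t s * f t) x y A).
  { apply (RInt_correct (V:=R_CompleteNormedModule)). apply exRInt_U; auto. intros; apply cmul; auto. apply Upow_cont; auto. }
  assert (IB : is_RInt (fun t => Rpower t (s - 1) * f t) x y B).
  { apply (RInt_correct (V:=R_CompleteNormedModule)). apply exRInt_U; auto. intros; apply cmul; auto. apply Upow_cont; auto. }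
  assert (I2 := is_RInt_minus _ _ _ _ _ _ (is_RInt_scal _ _ _ (Pv s) _ IA) (is_RInt_scal _ _ _ (Pu s) _ IB)).
  assert (I3 : is_RInt (dbeta s) x y (Pv s * A - Pu s * B)).
  { apply (is_RInt_ext (V:=R_NormedModule) (fun t => minus (scal (Pv s) (Rpower t s * f t)) (scal (Pu s) (Rpower t (s - 1) * f t)))).
    intros t Ht. rewrite Rmin_left in Ht by lra. rewrite Rmax_right in Ht by lra.
    unfold minus, plus, opp, scal; simpl. unfold mult; simpl. unfold dbeta.
    rewrite (Rpower_S1 t s) by lra. ring. exact I2. }
  rewrite <- (is_RInt_unique _ _ _ _ I1). apply (is_RInt_unique _ _ _ _ I3).
Qed.

Lemma beta_bnd s : 1 <= s -> exists d B, 0 < d /\ forall x, 0 < x < d -> Rabs (beta s x) <= B.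
Proof.
  intros Hs. destruct (WB 1 Rlt_0_1) as [d [Hd Hw]].
  exists (d / 2), (Rabs (beta s (d/2)) + Rabs (Pv s) + Rabs (Pu s)). split. lra.
  intros x Hx. assert (E := beta_int s x (d/2) ltac:(lra) ltac:(lra) ltac:(lra)).
  assert (A1 := Hw s x (d/2) ltac:(lra) ltac:(lra) ltac:(lra) ltac:(lra)).
  assert (A2 := Hw (s - 1) x (d/2) ltac:(lra) ltac:(lra) ltac:(lra) ltac:(lra)).
  replace (beta s x) with (beta s (d/2) + (- Pv s) * RInt (fun t => Rpower t s * f t) x (d/2) + Pu s * RInt (fun t => Rpower t (s - 1) * f t) x (d/2)) by lra.
  eapply Rle_trans. apply Rabs_triang. eapply Rle_trans. apply Rplus_le_compat_r. apply Rabs_triang.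
  rewrite !Rabs_mult, Rabs_Ropp.
  assert (0 <= Rabs (Pv s)) by apply Rabs_pos. assert (0 <= Rabs (Pu s)) by apply Rabs_pos.
  nra.
Qed.

Lemma Wc_polyS c k : polyS k (fun s x => Wc c k s x).
Proof.
  induction k. simpl. auto.
  apply (polyS_ext (S k) (fun s x => prodD c k f x + (c k - s) * Wc c k s x)). intros; reflexivity.
  apply (polyS_add (S k)). apply polyS_const. apply polyS_mulc; auto.
Qed.

Lemma w_polyS : polyS m w.
Proof.
  apply (polyS_ext m (fun s x => Wc u' m s x + (- x) * Wc v' m (s + 1) x)).
  intros; unfold w; ring.
  apply polyS_add. apply Wc_polyS. apply (polyS_scalx m (fun x => - x)).
  apply (polyS_shift m 1 (fun s x => Wc v' m s x)). apply Wc_polyS.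
Qed.

Lemma beta_lim0_gt1 sg : 1 < sg -> filterlim (beta sg) (at_right 0) (locally 0).
Proof.
  intros Hsg.
  set (pts := fun j : nat => 1 + (sg - 1) * ((INR j + 1) / (INR m + 2))).
  assert (Hp : forall j, (j <= m)%nat -> 1 <= pts j < sg).
  { intros j Hj. unfold pts. apply le_INR in Hj. assert (0 <= INR j) by apply pos_INR.
    assert (0 < (INR j + 1) / (INR m + 2) < 1).
    { split. apply Rdiv_lt_0_compat; lra. apply Rmult_lt_reg_r with (INR m + 2). lra.
      unfold Rdiv. rewrite Rmult_assoc, Rinv_l by lra. lra. }
    nra. }
  assert (H := polyS_interp (at_right 0) m w (fun x => Rpower x sg) (fun x => x) pts w_polyS).
  apply (filterlim_ext (fun x => Rpower x sg * w sg x)). intros; reflexivity.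
  apply H.
  { intros i j Hi Hj Hij Heq. apply Hij. unfold pts in Heq.
    assert ((INR i + 1) / (INR m + 2) = (INR j + 1) / (INR m + 2)).
    { apply Rmult_eq_reg_l with (sg - 1). lra. lra. }
    assert (INR i = INR j).
    { assert (0 < INR m + 2) by (assert (0 <= INR m) by apply pos_INR; lra).
      apply Rmult_eq_compat_r with (r := INR m + 2) in H0. unfold Rdiv in H0.
      rewrite !Rmult_assoc, Rinv_l in H0 by lra. lra. }
    apply INR_eq; auto. }
  intros j Hj. destruct (Hp j Hj) as [Hp1 Hp2].
  destruct (beta_bnd (pts j) Hp1) as [d [B [Hd Hb]]].
  apply (filterlim_ext_loc (fun x => Rpower x (sg - pts j) * beta (pts j) x)).
  { exists (mkposreal 1 Rlt_0_1). intros y _ Hy. unfold beta.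
    rewrite <- Rmult_assoc, <- Rpower_plus. f_equal. f_equal. ring. }
  apply (bnd_lim (beta (pts j)) (fun x => Rpower x (sg - pts j)) d B); auto.
  apply Rpow_lim0. lra.
Qed.

Lemma prodR_polyS c k : polyS k (fun s _ => prodR k (fun j => c j - s)).
Proof.
  induction k. simpl. auto.
  apply (polyS_ext (S k) (fun s x => (c k - s) * prodR k (fun j => c j - s))). intros; simpl; ring.
  apply (polyS_mulc k (c k) (fun s _ => prodR k (fun j => c j - s))). auto.
Qed.

Lemma cont_s (P : R -> R -> R) n x : polyS n P ->
  filterlim (fun s => P s x) (locally 1) (locally (P 1 x)).
Proof. intros H. apply polyS_cont with n; auto. Qed.

Lemma small_prod (a A e c : R) : Rabs A <= e -> Rabs a <= c -> -(c * e) <= a * A <= c * e.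
Proof. intros H1 H2. apply Rabs_le_between. rewrite Rabs_mult.
  apply Rmult_le_compat; auto; apply Rabs_pos. Qed.

Lemma beta_lim0_1 : filterlim (beta 1) (at_right 0) (locally 0).
Proof.
  apply filterlim_locally. intros eps.
  set (a1 := Pv 1). set (b1 := Pu 1).
  assert (Ha1 := Rabs_pos a1). assert (Hb1 := Rabs_pos b1).
  set (K := 2 * Rabs a1 + 2 * Rabs b1 + 3).
  assert (HK : 0 < K) by (unfold K; lra).
  assert (He : 0 < eps / (4 * K)) by (apply Rdiv_lt_0_compat; [apply cond_pos|lra]).
  destruct (WB _ He) as [d [Hd Hw]].
  set (x0 := d / 2).
  assert (C1 : filterlim (fun s => beta s x0) (locally 1) (locally (beta 1 x0))).
  { unfold beta. apply (@lim_mult R (locally 1) _).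
    apply (cder (fun s => Rpower x0 s) 1 (ln x0 * Rpower x0 1)). unfold Rpower. auto_derive. auto. ring.
    apply (cont_s w m x0 w_polyS). }
  assert (C2 : filterlim (fun s => Pv s) (locally 1) (locally (Pv 1))).
  { apply (cont_s (fun s _ => Pv s) m 0). unfold Pv.
    apply (polyS_shift m 1 (fun s _ => prodR m (fun j => v' j - s))). apply prodR_polyS. }
  assert (C3 : filterlim (fun s => Pu s) (locally 1) (locally (Pu 1))).
  { apply (cont_s (fun s _ => Pu s) m 0). unfold Pu. apply prodR_polyS. }
  assert (Heps4 : 0 < eps / 4) by (assert (0 < eps) by apply cond_pos; lra).
  assert (L1 := proj1 (filterlim_locally _ _) C1 (mkposreal _ Heps4)).
  assert (L2 := proj1 (filterlim_locally _ _) C2 (mkposreal _ Rlt_0_1)).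
  assert (L3 := proj1 (filterlim_locally _ _) C3 (mkposreal _ Rlt_0_1)).
  destruct (filter_and _ _ L1 (filter_and _ _ L2 L3)) as [e Hee].
  set (sg := 1 + e / 2).
  assert (Hsg : ball 1 e sg).
  { apply ball_R. unfold sg. replace (1 + e/2 - 1) with (e/2) by ring.
    assert (0 < e) by apply cond_pos. rewrite Rabs_pos_eq; lra. }
  destruct (Hee sg Hsg) as [S1 [S2 S3]].
  change (Rabs (beta sg x0 - beta 1 x0) < eps / 4) in S1.
  change (Rabs (Pv sg - a1) < 1) in S2. change (Rabs (Pu sg - b1) < 1) in S3.
  assert (Hsg1 : 1 < sg) by (unfold sg; assert (0 < e) by apply cond_pos; lra).
  assert (L4 := proj1 (filterlim_locally _ _) (beta_lim0_gt1 sg Hsg1) (mkposreal _ Heps4)).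
  assert (L5 : at_right 0 (fun x => 0 < x < x0)).
  { exists (mkposreal x0 ltac:(unfold x0; lra)). intros y Hy Hy0.
    change (Rabs (y - 0) < x0) in Hy. rewrite Rminus_0_r, Rabs_pos_eq in Hy; lra. }
  generalize (filter_and _ _ L4 L5). apply filter_imp. intros x [Hx1 Hx2].
  change (Rabs (beta sg x - 0) < eps / 4) in Hx1. change (Rabs (beta 1 x - 0) < eps).
  rewrite Rminus_0_r in *.
  assert (E1 := beta_int 1 x x0 ltac:(lra) ltac:(lra) ltac:(unfold x0; lra)).
  assert (E2 := beta_int sg x x0 ltac:(lra) ltac:(lra) ltac:(unfold x0; lra)).
  assert (A1 := Hw 1 x x0 ltac:(lra) ltac:(lra) ltac:(lra) ltac:(unfold x0; lra)).
  assert (A2 := Hw (1 - 1) x x0 ltac:(lra) ltac:(lra) ltac:(lra) ltac:(unfold x0; lra)).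
  assert (A3 := Hw sg x x0 ltac:(lra) ltac:(lra) ltac:(lra) ltac:(unfold x0; lra)).
  assert (A4 := Hw (sg - 1) x x0 ltac:(lra) ltac:(lra) ltac:(lra) ltac:(unfold x0; lra)).
  fold a1 b1 in E1.
  assert (Pv1 : Rabs (Pv sg) <= Rabs a1 + 1).
  { replace (Pv sg) with ((Pv sg - a1) + a1) by ring. eapply Rle_trans. apply Rabs_triang. lra. }
  assert (Pu1 : Rabs (Pu sg) <= Rabs b1 + 1).
  { replace (Pu sg) with ((Pu sg - b1) + b1) by ring. eapply Rle_trans. apply Rabs_triang. lra. }
  assert (B1 := small_prod _ _ _ _ A1 (Rle_refl (Rabs a1))).
  assert (B2 := small_prod _ _ _ _ A2 (Rle_refl (Rabs b1))).
  assert (B3 := small_prod _ _ _ _ A3 Pv1).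
  assert (B4 := small_prod _ _ _ _ A4 Pu1).
  apply Rabs_lt_between in Hx1. apply Rabs_lt_between in S1.
  assert (Hk : (Rabs a1 * (eps / (4 * K)) + Rabs b1 * (eps / (4 * K)) + (Rabs a1 + 1) * (eps / (4 * K)) + (Rabs b1 + 1) * (eps / (4 * K))) <= eps / 4).
  { replace (Rabs a1 * (eps / (4 * K)) + Rabs b1 * (eps / (4 * K)) + (Rabs a1 + 1) * (eps / (4 * K)) + (Rabs b1 + 1) * (eps / (4 * K)))
      with ((K - 1) * (eps / (4 * K))) by (unfold K; ring).
    replace (eps / 4) with (K * (eps / (4 * K))) by (field; lra).
    apply Rmult_le_compat_r; lra. }
  apply Rabs_lt_between. split; lra.
Qed.

Hypothesis Hv : forall i k : nat, (i < m)%nat -> v i + INR k <> 0.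

Lemma Pv_nz n : Pv (INR n + 1) <> 0.
Proof. unfold Pv, v'. apply prodR_nz. intros i Hi.
  assert (H := Hv i n Hi). lra. Qed.

Lemma beta_lim0 n : filterlim (beta (INR n + 1)) (at_right 0) (locally 0).
Proof.
  destruct n. simpl. replace (0 + 1) with 1 by ring. apply beta_lim0_1.
  apply beta_lim0_gt1. assert (0 < INR (S n)) by (apply lt_0_INR; lia). lra.
Qed.

Lemma step n M : is_RInt_gen (fun x => x ^ n * f x) (at_right 0) (at_left 1) M ->
  is_RInt_gen (fun x => x ^ (S n) * f x) (at_right 0) (at_left 1) (Pu (INR n + 1) / Pv (INR n + 1) * M).
Proof.
  intros HM. set (s := INR n + 1).
  assert (Hsub : forall a b x, U a -> U b -> Rmin a b <= x <= Rmax a b -> U x).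
  { intros a b x Ha Hb [H1 H2]. unfold U in *. split.
    apply Rlt_le_trans with (Rmin a b); auto. apply Rmin_glb_lt; lra.
    apply Rle_lt_trans with (Rmax a b); auto. apply Rmax_lub_lt; lra. }
  assert (D : is_RInt_gen (Derive (beta s)) (at_right 0) (at_left 1) (0 - 0)).
  { apply is_RInt_gen_Derive.
    - apply (Filter_prod _ _ _ U U at_right0_U at_left1_U). intros a b Ha Hb x Hx.
      exists (dbeta s x). apply beta_deriv. simpl in Hx. apply (Hsub a b x); auto.
    - apply (Filter_prod _ _ _ U U at_right0_U at_left1_U). intros a b Ha Hb x Hx.
      simpl in Hx. assert (Ux := Hsub a b x Ha Hb Hx).
      apply (continuous_ext_loc _ (dbeta s) x).
      { generalize (U_loc x Ux). apply filter_imp. intros y Uy.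
        symmetry; apply is_derive_unique; apply beta_deriv; auto. }
      unfold dbeta. apply cmul. apply cmul. apply Upow_cont; auto.
      apply cplus. apply cmul. apply cconst. apply continuous_id. apply cconst. apply f_cont; auto.
    - apply beta_lim0.
    - apply beta_lim1. }
  assert (D2 : is_RInt_gen (fun t => Pv s * (t ^ (S n) * f t) - Pu s * (t ^ n * f t)) (at_right 0) (at_left 1) (0 - 0)).
  { apply (is_RInt_gen_ext (Derive (beta s))); auto.
    apply (Filter_prod _ _ _ U U at_right0_U at_left1_U). intros a b Ha Hb x Hx.
    simpl in Hx. assert (Ux : U x) by (apply (Hsub a b x); auto; lra).
    rewrite (is_derive_unique _ _ _ (beta_deriv s x Ux)). unfold dbeta, s.
    replace (INR n + 1 - 1) with (INR n) by ring. rewrite Rpower_pow by apply Ux. simpl. ring. }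
  assert (D3 := is_RInt_gen_plus _ _ _ _ D2 (is_RInt_gen_scal _ (Pu s) _ HM)).
  assert (D4 := is_RInt_gen_scal _ (/ Pv s) _ D3).
  replace (Pu s / Pv s * M) with (scal (/ Pv s) (plus (0 - 0) (scal (Pu s) M))).
  2:{ unfold scal, plus; simpl. unfold mult; simpl. field. apply Pv_nz. }
  eapply is_RInt_gen_ext; [ | exact D4].
  apply (Filter_prod _ _ _ U U at_right0_U at_left1_U). intros a b _ _ x _.
  unfold scal, plus; simpl. unfold mult; simpl. field. apply Pv_nz.
Qed.

Lemma main_sec n : is_RInt_gen (fun x => x ^ n * f x) (at_right 0) (at_left 1)
      (prodR m (fun i => poch (u i) n / poch (v i) n) * I0).
Proof.
  induction n.
  { apply (is_RInt_gen_ext f). apply (Filter_prod _ _ _ U U at_right0_U at_left1_U).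
    intros; simpl; ring.
    replace (prodR m (fun i => poch (u i) 0 / poch (v i) 0) * I0) with I0. exact HI.
    rewrite (prodR_ext m _ (fun _ => 1)). rewrite prodR_one; ring. intros; simpl; field. }
  assert (H := step n _ IHn).
  replace (prodR m (fun i => poch (u i) (S n) / poch (v i) (S n)) * I0)
    with (Pu (INR n + 1) / Pv (INR n + 1) * (prodR m (fun i => poch (u i) n / poch (v i) n) * I0)).
  exact H.
  set (r := fun i => (u i + INR n) / (v i + INR n)).
  assert (E1 : prodR m (fun i => poch (u i) (S n) / poch (v i) (S n)) =
     prodR m (fun i => poch (u i) n / poch (v i) n) * prodR m r).
  { rewrite <- prodR_mult. apply prodR_ext. intros i Hi. unfold r; simpl.
    assert (poch (v i) n <> 0) by (apply poch_nz; intros; apply Hv; auto).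
    assert (v i + INR n <> 0) by (apply Hv; auto). field; auto. }
  assert (E2 : Pu (INR n + 1) = prodR m r * Pv (INR n + 1)).
  { unfold Pu, Pv, u', v'. rewrite <- prodR_mult. apply prodR_ext. intros i Hi. unfold r.
    assert (v i + INR n <> 0) by (apply Hv; auto). field; auto. }
  rewrite E1, E2. field. apply Pv_nz.
Qed.

End LDsec.

Theorem mainTheorem3 (m : nat) (Hm : (1 <= m)%nat) (u v : nat -> R)
  (Hv : forall i k : nat, (i < m)%nat -> v i + INR k <> 0)
  (f : R -> R)
  (Hdiff : forall (k : nat) (x : R), (k <= m)%nat -> 0 < x < 1 -> ex_derive_n f k x)
  (Hode : forall x : R, 0 < x < 1 -> Top m u v f x = 0)
  (Hf1 : f 1 = 0)
  (Hinit : forall j : nat, (j < m)%nat ->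
     filterlim (Derive_n f j) (at_left 1) (locally 0))
  (I : R) (HI : is_RInt_gen f (at_right 0) (at_left 1) I) :
  forall n : nat,
    is_RInt_gen (fun x => x ^ n * f x) (at_right 0) (at_left 1)
      (prodR m (fun i => poch (u i) n / poch (v i) n) * I).
Proof.
  intros n. eapply main_sec; eauto.
Qed.
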